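(* Let $M$ be an $n\times n$ complex Hadamard matrix, let $\Gamma$ be the group of all $n\times n$ complex monomial matrices $P$ with $PMP^\ast=M$, let $\pi\colon\Gamma\to\mathrm{Sym}_n$ send a monomial matrix to its underlying permutation, let $G=\pi(\Gamma)$, assume $G$ is transitive, and let $\Gamma_{\rm f}=\{L\in\Gamma:\det(L)=1\}$. Suppose that $G$ and $\Gamma_{\rm f}$ are perfect. Let $\hat{G}$ be a Schur cover of $G$, let $H\leq G$ be a point stabiliser, and let $\hat{H}\leq\hat{G}$ be the full preimage of $H$ under the projection $\hat{G}\to G$. Then $\Gamma_{\rm f}=\rho(\hat{G})$ for some representation $\rho$ of $\hat{G}$ induced from a linear character of $\hat{H}$. *)

(* Defs.v *)
From HB Require Import structures.
From mathcomp Require Import all_boot all_order all_algebra all_fingroup all_solvable all_field all_character.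
Set Implicit Arguments. Unset Strict Implicit. Unset Printing Implicit Defensive.
Import GroupScope GRing.Theory Num.Theory.
Local Open Scope ring_scope.

Definition ctrmx n (M : 'M[algC]_n) : 'M[algC]_n := (map_mx Num.conj M)^T.

Definition complex_hadamard n (M : 'M[algC]_n) : Prop :=
  (forall i j, `|M i j| = 1) /\ M *m ctrmx M = n%:R%:M.

Definition monomial n (P : 'M[algC]_n) : bool :=
  [forall i, #|[pred j | P i j != 0]| == 1%N] &&
  [forall j, #|[pred i | P i j != 0]| == 1%N].

Definition Gamma n (M : 'M[algC]_n) (P : 'M[algC]_n) : Prop :=
  monomial P /\ P *m M *m ctrmx P = M.

Definition Gamma_f n (M : 'M[algC]_n) (L : 'M[algC]_n) : Prop :=
  Gamma M L /\ \det L = 1.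

(* the underlying permutation of a monomial matrix P is s, i.e. the nonzero
   entry of row i lies in column s i (row-vector convention, so that
   P |-> its permutation is a homomorphism for mathcomp's perm product) *)
Definition underlying_perm n (P : 'M[algC]_n) (s : {perm 'I_n}) : Prop :=
  forall i, P i (s i) != 0.

Definition mxcomm n (A B : 'M[algC]_n) : 'M[algC]_n :=
  invmx A *m invmx B *m A *m B.

(* a (finite) group S of matrices is perfect: it equals its derived subgroup,
   i.e. every element is a finite product of commutators of elements of S
   (the subgroup generated by commutators consists of such products, as the
   inverse of a commutator is a commutator) *)
Definition perfect_mx n (S : 'M[algC]_n -> Prop) : Prop :=
  forall L, S L -> exists s : seq ('M[algC]_n * 'M[algC]_n),
    (forall p, p \in s -> S p.1 /\ S p.2) /\
    L = foldr (fun p acc => mxcomm p.1 p.2 *m acc) 1%:M s.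

Definition perfect_group (gT : finGroupType) (G : {set gT}) : Prop :=
  (G^`(1))%g = G.

Definition stem_extension (gT rT : finGroupType) (Gh : {group gT})
    (phi : {morphism Gh >-> rT}) (G : {set rT}) : Prop :=
  (phi @* Gh)%g = G /\ ('ker phi \subset 'Z(Gh) :&: Gh^`(1))%g.

Definition schur_cover (gT rT : finGroupType) (Gh : {group gT})
    (phi : {morphism Gh >-> rT}) (G : {set rT}) : Prop :=
  stem_extension phi G /\
  forall (kT : finGroupType) (K : {group kT}) (psi : {morphism K >-> rT}),
    stem_extension psi G -> (#|K| <= #|Gh|)%N.

Definition left_transversal (gT : finGroupType) n (Gh Hh : {set gT})
    (t : 'I_n -> gT) : Prop :=
  (forall i, t i \in Gh) /\
  (forall i j, ((t i)^-1 * t j)%g \in Hh -> i = j) /\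
  (forall g, g \in Gh -> exists i, ((t i)^-1 * g)%g \in Hh).

(* the matrix of the representation induced from the class function lam
   of Hh (zero outside Hh), with respect to the transversal t *)
Definition induced_mx (gT : finGroupType) n (Hh : {group gT})
    (lam : 'CF(Hh)) (t : 'I_n -> gT) (g : gT) : 'M[algC]_n :=
  \matrix_(i, j) lam ((t i)^-1 * g * t j)%g.

Definition induced_from_linear_char (gT : finGroupType) n (Gh Hh : {group gT})
    (rho : mx_representation algC Gh n) : Prop :=
  exists (lam : 'CF(Hh)) (t : 'I_n -> gT) (A : 'M[algC]_n),
    lam \is a linear_char /\ left_transversal Gh Hh t /\ A \in unitmx /\
    forall g, g \in Gh -> rho g = invmx A *m induced_mx lam t g *m A.

(* Main.v *)
Require Import Defs.
From HB Require Import structures.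
From mathcomp Require Import all_boot all_order all_algebra all_fingroup all_solvable all_field all_character.
From mathcomp Require Import ring.
From Stdlib Require Import ClassicalEpsilon.
Import GroupScope GRing.Theory Num.Theory.
Local Open Scope ring_scope.
Set Implicit Arguments. Unset Strict Implicit. Unset Printing Implicit Defensive.

Definition ismono n (P : 'M[algC]_n) (s : {perm 'I_n}) :=
  forall i j, (P i j != 0) = (j == s i).

Lemma monomialP n (P : 'M[algC]_n) : monomial P -> exists s, ismono P s.
Proof.
case/andP=> /forallP Hr /forallP Hc.
have Hr' i : exists j, [pred j | P i j != 0] =i pred1 j by apply/card1P; exact: Hr.
have Hc' j : exists i, [pred i | P i j != 0] =i pred1 i by apply/card1P; exact: Hc.
pose f i := odflt i [pick j | P i j != 0].
have fP i j : (P i j != 0) = (j == f i).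
  rewrite /f; case: pickP => [j0 /= Hj0|/= H0].
    have [k Hk] := Hr' i.
    have E y : (P i y != 0) = (y == k) by move: (Hk y); rewrite !inE.
    by rewrite E; move: Hj0; rewrite E => /eqP ->.
  have [k Hk] := Hr' i.
  have E y : (P i y != 0) = (y == k) by move: (Hk y); rewrite !inE.
  by move: (H0 k); rewrite E eqxx.
have finj : injective f.
  move=> i i' Hf; have [k Hk] := Hc' (f i).
  have h1 : P i (f i) != 0 by rewrite fP.
  have h2 : P i' (f i) != 0 by rewrite fP Hf.
  have E y : (P y (f i) != 0) = (y == k) by move: (Hk y); rewrite !inE.
  by move: h1 h2; rewrite !E => /eqP -> /eqP ->.
exists (perm finj) => i j; by rewrite permE fP.
Qed.

Lemma mono_monomial n (P : 'M[algC]_n) s : ismono P s -> monomial P.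
Proof.
move=> H; apply/andP; split; apply/forallP => i; apply/card1P.
  by exists (s i) => j; rewrite !inE /= H.
exists (s^-1 i)%g => j; rewrite !inE /= H.
by apply/eqP/eqP => [->|->]; rewrite ?permKV ?permK.
Qed.

Lemma mulmx_monol n (P A : 'M[algC]_n) s : ismono P s ->
  forall i j, (P *m A) i j = P i (s i) * A (s i) j.
Proof.
move=> H i j; rewrite mxE (bigD1 (s i)) //= big1 ?addr0 // => k Hk.
have /eqP -> : P i k == 0 by apply/negPn; rewrite H (negbTE Hk).
by rewrite mul0r.
Qed.

Lemma mulmx_ctr_monor n (P A : 'M[algC]_n) s : ismono P s ->
  forall i j, (A *m ctrmx P) i j = A i (s j) * (P j (s j))^*.
Proof.
move=> H i j; rewrite mxE (bigD1 (s j)) //= big1 ?addr0.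
  by rewrite /ctrmx !mxE.
move=> k Hk; rewrite /ctrmx !mxE.
have /eqP -> : P j k == 0 by apply/negPn; rewrite H (negbTE Hk).
by rewrite conjC0 mulr0.
Qed.

Lemma mono_mul n (P Q : 'M[algC]_n) s t : ismono P s -> ismono Q t -> ismono (P *m Q) (s * t).
Proof.
move=> HP HQ i j; rewrite (mulmx_monol _ HP) permM mulf_eq0 negb_or HQ.
have -> : P i (s i) != 0 by rewrite HP.
by [].
Qed.

Lemma mono_perm_uniq n (P : 'M[algC]_n) s t : ismono P s -> underlying_perm P t -> s = t.
Proof. by move=> H Ht; apply/permP => i; apply/esym/eqP; rewrite -H Ht. Qed.

Lemma mono_underlying n (P : 'M[algC]_n) s : ismono P s -> underlying_perm P s.
Proof. by move=> H i; rewrite H. Qed.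

Lemma gamma_entry n (M P : 'M[algC]_n) s : Gamma M P -> ismono P s ->
  forall i j, P i (s i) * M (s i) (s j) * (P j (s j))^* = M i j.
Proof.
case=> _ HG H i j; rewrite -{2}HG (mulmx_ctr_monor _ H) (mulmx_monol _ H).
by [].
Qed.

Lemma normr_eq1 (x : algC) : x * x^* = 1 -> `|x| = 1.
Proof.
by move=> h; apply/eqP; rewrite -(@pexpr_eq1 _ _ 2) ?normr_ge0 // normCK h.
Qed.

Lemma gamma_norm n (M P : 'M[algC]_n) s : (forall i j, `|M i j| = 1) ->
  Gamma M P -> ismono P s -> forall i, `|P i (s i)| = 1.
Proof.
move=> HM HG H i; have := gamma_entry HG H i i.
move=> /(congr1 (fun z => `|z|)); rewrite !normrM !HM mulr1 norm_conjC => h.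
by apply/eqP; rewrite -(@pexpr_eq1 _ _ 2) ?normr_ge0 // expr2 h.
Qed.

Lemma conj_unit (z : algC) : `|z| = 1 -> z * z^* = 1.
Proof. by move=> h; rewrite -normCK h expr1n. Qed.

Lemma gamma_same n (M P Q : 'M[algC]_n) s i0 : (forall i j, `|M i j| = 1) ->
  Gamma M P -> Gamma M Q -> ismono P s -> ismono Q s ->
  Q = (Q i0 (s i0) / P i0 (s i0)) *: P.
Proof.
move=> HM GP GQ HP HQ; apply/matrixP => j k; rewrite mxE.
have [/eqP ->|nk] := boolP (k == s j); last first.
  have /eqP -> : P j k == 0 by apply/negPn; rewrite HP (negbTE nk).
  have /eqP -> : Q j k == 0 by apply/negPn; rewrite HQ (negbTE nk).
  by rewrite mulr0.
have nP := gamma_norm HM GP HP; have nQ := gamma_norm HM GQ HQ.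
have eP := gamma_entry GP HP i0 j; have eQ := gamma_entry GQ HQ i0 j.
have Mn0 : M (s i0) (s j) != 0 by rewrite -normr_eq0 HM oner_eq0.
have p0 : P i0 (s i0) != 0 by rewrite -normr_eq0 nP oner_eq0.
have e1 : Q i0 (s i0) * (Q j (s j))^* = P i0 (s i0) * (P j (s j))^*.
  apply: (mulIf Mn0); by rewrite mulrAC eQ -eP mulrAC.
have e2 : Q i0 (s i0) * P j (s j) = P i0 (s i0) * Q j (s j).
  have cuQ : (Q j (s j))^* * Q j (s j) = 1 by rewrite mulrC conj_unit.
  have cuP : (P j (s j))^* * P j (s j) = 1 by rewrite mulrC conj_unit.
  rewrite -[LHS]mulr1 -cuQ.
  have -> : Q i0 (s i0) * P j (s j) * ((Q j (s j))^* * Q j (s j)) =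
    (Q i0 (s i0) * (Q j (s j))^*) * (Q j (s j) * P j (s j)) by ring.
  rewrite e1 -[RHS]mulr1 -cuP; ring.
by rewrite mulrAC e2 mulrAC divff // mul1r.
Qed.

Lemma det_mono n (P : 'M[algC]_n) s : ismono P s ->
  \det P = (-1) ^+ s * \prod_i P i (s i).
Proof.
move=> H; rewrite /determinant (bigD1 s) //= [X in _ + X]big1 ?addr0 // => t nt.
have [i ni] : exists i, t i != s i.
  apply/existsP; apply: contraR nt => /existsPn h; apply/eqP/permP => i.
  by apply/eqP; move: (h i); rewrite negbK.
rewrite (bigD1 i) //=.
have /eqP -> : P i (t i) == 0 by apply/negPn; rewrite H (negbTE ni).
by rewrite mul0r mulr0.
Qed.

Lemma ctrmx_mul n (A B : 'M[algC]_n) : ctrmx (A *m B) = ctrmx B *m ctrmx A.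
Proof. by rewrite /ctrmx map_mxM trmx_mul. Qed.

Lemma ctrmx1 n : ctrmx (1%:M : 'M[algC]_n) = 1%:M.
Proof. by rewrite /ctrmx map_mx1 trmx1. Qed.

Lemma ctrmxZ n a (A : 'M[algC]_n) : ctrmx (a *: A) = a^* *: ctrmx A.
Proof. by apply/matrixP=> i j; rewrite /ctrmx !mxE rmorphM. Qed.

Lemma gamma_mono n (M P : 'M[algC]_n) : Gamma M P -> exists s, ismono P s.
Proof. by case=> /monomialP. Qed.

Lemma gamma_mul n (M P Q : 'M[algC]_n) : Gamma M P -> Gamma M Q -> Gamma M (P *m Q).
Proof.
move=> GP GQ; have [s Hs] := gamma_mono GP; have [t Ht] := gamma_mono GQ.
split; first exact: mono_monomial (mono_mul Hs Ht).
case: GP GQ => _ eP [_ eQ].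
by rewrite ctrmx_mul !mulmxA -(mulmxA P Q) -(mulmxA P) eQ eP.
Qed.

Lemma gammaf_mul n (M P Q : 'M[algC]_n) : Gamma_f M P -> Gamma_f M Q -> Gamma_f M (P *m Q).
Proof. by case=> GP dP [GQ dQ]; split; [exact: gamma_mul|rewrite det_mulmx dP dQ mulr1]. Qed.

Lemma mono1 n : ismono (1%:M : 'M[algC]_n) 1.
Proof. by move=> i j; rewrite mxE perm1 [j == i]eq_sym; case: (i == j); rewrite /= ?oner_eq0 ?eqxx. Qed.

Lemma gammaf1 n (M : 'M[algC]_n) : Gamma_f M 1%:M.
Proof.
split; last exact: det1.
by split; [exact: mono_monomial (@mono1 n)|rewrite mul1mx ctrmx1 mulmx1].
Qed.

Lemma gamma_scalar n (M P : 'M[algC]_n) (i0 : 'I_n) : (forall i j, `|M i j| = 1) ->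
  Gamma M P -> ismono P 1 -> P = (P i0 i0)%:M.
Proof.
move=> HM GP HP; have G1 : Gamma M 1%:M by case: (gammaf1 M).
apply: (etrans (gamma_same i0 HM G1 GP (@mono1 n) HP)).
by rewrite perm1 [1%:M i0 i0]mxE eqxx divr1 scalemx1.
Qed.

Lemma gamma_lift n (M P : 'M[algC]_n) s (i0 : 'I_n) : (forall i j, `|M i j| = 1) ->
  Gamma M P -> ismono P s -> exists L, Gamma_f M L /\ ismono L s.
Proof.
move=> HM GP HP; have n0 : (0 < n)%N by case: i0 => i /=; case: n {M P s HP GP HM}.
have nd : `|\det P| = 1.
  rewrite (det_mono HP) normrM normrX normrN1 expr1n mul1r normr_prod.
  by rewrite big1 // => i _; rewrite (gamma_norm HM GP HP).
have d0 : \det P != 0 by rewrite -normr_eq0 nd oner_eq0.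
pose l := n.-root ((\det P)^-1).
have ln : l ^+ n = (\det P)^-1 by rewrite rootCK.
have nl : `|l| = 1.
  apply/eqP; rewrite -(@pexpr_eq1 _ _ n) ?normr_ge0 // -normrX ln normfV nd invr1 //.
have l0 : l != 0 by rewrite -normr_eq0 nl oner_eq0.
have Hl : ismono (l *: P) s by move=> i j; rewrite mxE mulf_eq0 negb_or l0 HP.
exists (l *: P); split => //.
split; last by rewrite detZ ln mulVf.
split; first exact: mono_monomial Hl.
case: GP => _ eP.
by rewrite ctrmxZ -scalemxAl -scalemxAr -scalemxAl eP scalerA mulrC conj_unit ?scale1r.
Qed.

Definition cdec (P : Prop) : bool :=
  if excluded_middle_informative P then true else false.

Lemma cdecP (P : Prop) : reflect P (cdec P).
Proof. by rewrite /cdec; case: excluded_middle_informative => h; constructor. Qed.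

Lemma gammaf_finite n (M : 'M[algC]_n) (i0 : 'I_n) : (forall i j, `|M i j| = 1) ->
  exists l : seq 'M[algC]_n, uniq l /\ forall L, Gamma_f M L <-> L \in l.
Proof.
move=> HM; have n0 : (0 < n)%N by case: i0 => i /=; case: n {M HM}.
have [z zP] := C_prim_root_exists n0.
pose Ps (s : {perm 'I_n}) := match excluded_middle_informative
   (exists L, Gamma_f M L /\ ismono L s) with
   | left h => proj1_sig (constructive_indefinite_description _ h)
   | right _ => 1%:M end.
have PsP s : (exists L, Gamma_f M L /\ ismono L s) -> Gamma_f M (Ps s) /\ ismono (Ps s) s.
  rewrite /Ps; case: excluded_middle_informative => // h _.
  by case: constructive_indefinite_description.
pose g (t : {perm 'I_n} * 'I_n) := z ^+ t.2 *: Ps t.1.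
exists (undup [seq g t | t <- enum {: {perm 'I_n} * 'I_n} & cdec (Gamma_f M (g t))]).
split; first exact: undup_uniq.
move=> L; rewrite mem_undup; split; last first.
  by case/mapP => t; rewrite mem_filter => /andP[/cdecP h _] ->.
move=> GL; have [s Hs] := gamma_mono GL.1.
have [GP HP] := PsP s (ex_intro _ L (conj GL Hs)).
have eL := gamma_same i0 HM GP.1 GL.1 HP Hs.
set c := _ / _ in eL.
have c1 : c ^+ n = 1.
  by have := GL.2; rewrite eL detZ GP.2 mulr1.
have [k ek] := prim_rootP zP c1.
apply/mapP; exists (s, k); last by rewrite /g /= eL ek.
rewrite mem_filter mem_enum andbT; apply/cdecP.
by rewrite /g /= -ek -eL.
Qed.

Section Dummy. End Dummy.

Definition rfun n (l : seq 'M[algC]_n) (L : 'M[algC]_n) :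
  {ffun 'I_(size l).-1.+1 -> 'I_(size l).-1.+1} :=
  [ffun k : 'I_(size l).-1.+1 => inord (index (nth 0 l k *m L) l)].
Definition rperm n (l : seq 'M[algC]_n) L : {perm 'I_(size l).-1.+1} := insubd (1%g : {perm 'I_(size l).-1.+1}) (rfun l L).
Definition lmat n (l : seq 'M[algC]_n) (p : {perm 'I_(size l).-1.+1}) : 'M[algC]_n :=
  nth 0 l (p (inord (index 1%:M l))).

Lemma size_l n (M : 'M[algC]_n) l : (forall L, Gamma_f M L <-> L \in l) ->
  (size l).-1.+1 = size l.
Proof.
move=> Hl; apply: prednK; have : 1%:M \in l by apply/Hl/gammaf1.
by case: l {Hl}.
Qed.

Lemma gammaf_unit n (M L : 'M[algC]_n) : Gamma_f M L -> L \in unitmx.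
Proof. by case=> _ d; rewrite unitmxE d unitr1. Qed.

Lemma rpermE n (M : 'M[algC]_n) l L : (forall L, Gamma_f M L <-> L \in l) -> uniq l ->
  Gamma_f M L -> forall k, rperm l L k = inord (index (nth 0 l k *m L) l).
Proof.
move=> Hl ul GL k.
have sz := size_l Hl.
have lt1 m : (m < (size l).-1.+1)%N -> (m < size l)%N by rewrite sz.
have lt2 m : (m < size l)%N -> (m < (size l).-1.+1)%N by rewrite sz.
have inl (c : 'I_(size l).-1.+1) : nth 0 l c *m L \in l.
  by apply/Hl/gammaf_mul => //; apply/Hl/mem_nth/lt1.
have inj : injectiveb (rfun l L).
  apply/injectiveP => a b; rewrite !ffunE => /(congr1 (@nat_of_ord _)).
  rewrite !inordK ?lt2 ?index_mem ?inl // => /(congr1 (nth 0 l)).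
  rewrite !nth_index ?inl //.
  move/(congr1 (mulmx^~ (invmx L))); rewrite !mulmxK ?(gammaf_unit GL) //.
  by move=> /eqP; rewrite nth_uniq ?ul ?lt1 // => /eqP h; apply: val_inj.
transitivity (pval (rperm l L) k); first by rewrite pvalE.
by rewrite /rperm insubdK // ffunE.
Qed.

Lemma rperm_mul n (M : 'M[algC]_n) l L L' : (forall L, Gamma_f M L <-> L \in l) -> uniq l ->
  Gamma_f M L -> Gamma_f M L' -> rperm l (L *m L') = (rperm l L * rperm l L')%g.
Proof.
move=> Hl ul GL GL'; have sz := size_l Hl.
have lt1 m : (m < (size l).-1.+1)%N -> (m < size l)%N by rewrite sz.
have lt2 m : (m < size l)%N -> (m < (size l).-1.+1)%N by rewrite sz.
have GLL := gammaf_mul GL GL'.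
apply/permP => k; rewrite permM !(rpermE Hl ul) //.
have inl : nth 0 l k *m L \in l by apply/Hl/gammaf_mul => //; apply/Hl/mem_nth/lt1.
by rewrite inordK ?lt2 ?index_mem // nth_index // mulmxA.
Qed.

Lemma rperm1 n (M : 'M[algC]_n) l : (forall L, Gamma_f M L <-> L \in l) -> uniq l ->
  rperm l 1%:M = 1%g.
Proof.
move=> Hl ul; have sz := size_l Hl.
have lt1 m : (m < (size l).-1.+1)%N -> (m < size l)%N by rewrite sz.
have G1 := gammaf1 M.
apply/permP => k; rewrite (rpermE Hl ul G1) perm1 mulmx1 index_uniq ?lt1 //.
by rewrite inord_val.
Qed.

Lemma lmat_rperm n (M : 'M[algC]_n) l L : (forall L, Gamma_f M L <-> L \in l) -> uniq l ->
  Gamma_f M L -> lmat (rperm l L) = L.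
Proof.
move=> Hl ul GL; have sz := size_l Hl.
have lt2 m : (m < size l)%N -> (m < (size l).-1.+1)%N by rewrite sz.
have i1 : 1%:M \in l by apply/Hl/gammaf1.
have iL : L \in l by apply/Hl.
have e1 : nth 0 l (inord (index 1%:M l) : 'I_(size l).-1.+1) = 1%:M.
  by rewrite inordK ?lt2 ?index_mem // nth_index.
by rewrite /lmat (rpermE Hl ul) // e1 mul1mx inordK ?lt2 ?index_mem // nth_index.
Qed.

Lemma rperm_inj n (M : 'M[algC]_n) l L L' : (forall L, Gamma_f M L <-> L \in l) -> uniq l ->
  Gamma_f M L -> Gamma_f M L' -> rperm l L = rperm l L' -> L = L'.
Proof.
move=> Hl ul GL GL' e.
by rewrite -(lmat_rperm Hl ul GL) -(lmat_rperm Hl ul GL') e.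
Qed.

Definition Eset n (M : 'M[algC]_n) (l : seq 'M[algC]_n) (gT : finGroupType) (Gh : {group gT})
  (phi : {morphism Gh >-> {perm 'I_n}}) : {set (gT * {perm 'I_(size l).-1.+1})%type} :=
  [set u | (u.1 \in Gh) && cdec (exists L, Gamma_f M L /\ u.2 = rperm l L /\ ismono L (phi u.1))].

Lemma Eset_group n (M : 'M[algC]_n) l gT (Gh : {group gT}) (phi : {morphism Gh >-> {perm 'I_n}}) :
  (forall L, Gamma_f M L <-> L \in l) -> uniq l -> group_set (Eset M l phi).
Proof.
move=> Hl ul; apply/group_setP; split.
  rewrite inE /= group1; apply/cdecP; exists 1%:M; split; first exact: gammaf1.
  by rewrite (rperm1 Hl ul) morph1; split=> //; exact: mono1.
move=> u v; rewrite !inE => /andP[Gu /cdecP[L [GL [eu mu]]]] /andP[Gv /cdecP[L' [GL' [ev mv]]]].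
rewrite /= groupM //; apply/cdecP; exists (L *m L'); split; first exact: gammaf_mul.
rewrite (rperm_mul Hl ul GL GL') -eu -ev morphM //; split => //.
exact: mono_mul.
Qed.

Local Open Scope group_scope.
Lemma der1_central_mul (T : finGroupType) (A B C : {group T}) :
  A \subset (C * B)%g -> C \subset 'C(A) -> B \subset A -> (A^`(1) \subset B^`(1))%g.
Proof.
move=> sA cC sBA; rewrite !derg1 /commutator gen_subG.
apply/subsetP => _ /imset2P[x y Ax Ay ->].
have cent c z : c \in C -> z \in A -> commute c z.
  by move=> Cc Az; move/subsetP: cC => /(_ c Cc) /centP; apply.
case/mulsgP: (subsetP sA x Ax) => c b Cc Bb ex.
case/mulsgP: (subsetP sA y Ay) => c' b' Cc' Bb' ey.
have -> : [~ x, y] = [~ b, b'].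
  rewrite ex commMgJ.
  have /eqP -> : [~ c, y] == 1 by apply/commgP; exact: cent.
  rewrite conj1g mul1g ey commgMJ.
  have /eqP -> : [~ b, c'] == 1.
    by rewrite commg1_sym; apply/commgP; apply: cent => //; exact: (subsetP sBA).
  by rewrite conj1g mulg1.
by apply: mem_commg.
Qed.
Local Open Scope ring_scope.

Lemma exists_rho n (M : 'M[algC]_n) (G : {group {perm 'I_n}}) (gT : finGroupType)
  (Gh : {group gT}) (phi : {morphism Gh >-> {perm 'I_n}}) (x : 'I_n) :
  (forall i j, `|M i j| = 1) ->
  (forall s : {perm 'I_n}, s \in G <-> exists P, Gamma M P /\ underlying_perm P s) ->
  perfect_group G -> perfect_mx (Gamma_f M) -> schur_cover phi G ->
  exists rho : mx_representation algC Gh n,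
   (forall L, Gamma_f M L <-> exists2 g, g \in Gh & L = rho g) /\
   (forall g, g \in Gh -> ismono (rho g) (phi g)).
Proof.
move=> HM HGs pG pM [[imG kerG] maxG].
have [l [ul Hl]] := gammaf_finite x HM.
pose EG := Group (Eset_group phi Hl ul).
have EGP u : u \in EG -> u.1 \in Gh /\ exists L, Gamma_f M L /\ u.2 = rperm l L /\ ismono L (phi u.1).
  by rewrite inE => /andP[? /cdecP].
have EGI g L : g \in Gh -> Gamma_f M L -> ismono L (phi g) -> (g, rperm l L) \in EG.
  by move=> Gg GL mL; rewrite inE /= Gg; apply/cdecP; exists L.
have lift g : g \in Gh -> exists L, Gamma_f M L /\ ismono L (phi g).
  move=> Gg; have : phi g \in G by rewrite -imG mem_morphim.
  case/HGs => P [GP uP]; have [s Hs] := gamma_mono GP.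
  have es := mono_perm_uniq Hs uP; rewrite es in Hs.
  exact: gamma_lift x HM GP Hs.
have liftG s : s \in G -> exists g, g \in Gh /\ phi g = s.
  by rewrite -imG => /morphimP[g Dg _ ->]; exists g.
have permG L : Gamma_f M L -> exists s, s \in G /\ ismono L s.
  move=> GL; have [s Hs] := gamma_mono GL.1; exists s; split => //.
  by apply/HGs; exists L; split; [exact: GL.1|exact: mono_underlying].
have psiM : {in EG &, {morph (fun u : (gT * {perm 'I_(size l).-1.+1})%type => phi u.1) : u v / (u * v)%g}}.
  by move=> u v Eu Ev; rewrite /= morphM //; [exact: (EGP _ Eu).1|exact: (EGP _ Ev).1].
pose psiE := Morphism psiM.
have pGh : (Gh^`(1))%g = Gh.
  apply/eqP; rewrite eqEsubset der_sub /=.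
  have h : Gh \subset phi @*^-1 (phi @* Gh^`(1)).
    by rewrite morphim_der // imG pG -imG -sub_morphim_pre.
  rewrite morphimK ?der_sub // in h; apply: subset_trans h _.
  apply: mul_subG => //; by case/subsetIP: kerG.
have fstEG : (@fst gT {perm 'I_(size l).-1.+1}) @* EG = Gh.
  apply/eqP; rewrite eqEsubset; apply/andP; split.
    by apply/subsetP => _ /morphimP[u _ Eu ->]; exact: (EGP u Eu).1.
  apply/subsetP => g Gg; have [L [GL mL]] := lift g Gg.
  by apply/morphimP; exists (g, rperm l L) => //; exact: EGI.
have psiEG : psiE @* EG = G.
  apply/eqP; rewrite eqEsubset; apply/andP; split.
    apply/subsetP => _ /morphimP[u _ Eu ->]; rewrite -imG.
    by apply: mem_morphim; exact: (EGP u Eu).1.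
  apply/subsetP => s /liftG[g [Gg <-]]; have [L [GL mL]] := lift g Gg.
  by apply/morphimP; exists (g, rperm l L); [exact: EGI | exact: EGI | by []].
have rpS L : Gamma_f M L -> rperm l L \in (@snd gT {perm 'I_(size l).-1.+1}) @* EG.
  move=> GL; have [s [Gs mL]] := permG L GL; have [g [Gg es]] := liftG s Gs.
  apply/morphimP; exists (g, rperm l L); [by rewrite inE | | by []].
  by apply: EGI => //; rewrite es.
pose E' := (EG^`(1))%G.
have fstE' : (@fst gT {perm 'I_(size l).-1.+1}) @* E' = Gh.
  by rewrite morphim_der ?subsetT // fstEG pGh.
have psiE' : psiE @* E' = G by rewrite morphim_der // psiEG pG.
have cC : 'ker psiE \subset 'C(EG).
  apply/subsetP => u Ku; have Eu : u \in EG by move: Ku; rewrite inE => /andP[].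
  have k1 : phi u.1 = 1%g by move/(@kerP _ _ _ psiE _ Eu): Ku.
  have [Gu1 [L [GL [e2 mL]]]] := EGP u Eu.
  have cu1 : u.1 \in 'C(Gh).
    have : u.1 \in 'ker phi by apply/(@kerP _ _ _ phi _ Gu1).
    by move/(subsetP kerG); rewrite in_setI => /andP[]; rewrite /center in_setI => /andP[].
  rewrite k1 in mL; have eL := gamma_scalar x HM GL.1 mL.
  apply/centP => v Ev; have [Gv1 [L' [GL' [e2' mL']]]] := EGP v Ev.
  case: u Ku Eu k1 Gu1 e2 mL cu1 => u1 u2 /= _ _ _ _ e2 _ cu1.
  case: v Ev Gv1 e2' mL' => v1 v2 /= _ Gv1 e2' _.
  rewrite /commute; change ((u1 * v1, u2 * v2)%g = (v1 * u1, v2 * u2)%g).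
  congr (_, _); first by move/centP: cu1 => /(_ v1 Gv1).
  rewrite e2 e2' -!(rperm_mul Hl ul) //; congr rperm.
  by rewrite eL scalar_mxC.
have sE'E : E' \subset EG by exact: der_sub.
have EGdec : EG \subset ('ker psiE * E')%g.
  have h : EG \subset psiE @*^-1 (psiE @* EG) by rewrite -sub_morphim_pre.
  by rewrite psiEG -psiE' morphimK // in h.
have perf : (E'^`(1))%g = E'.
  apply/eqP; rewrite eqEsubset der_sub /=.
  exact: (der1_central_mul EGdec cC sE'E).
pose psi := restrm sE'E psiE.
have stem : stem_extension psi G.
  split; first by rewrite morphim_restrm setIid psiE'.
  rewrite ker_restrm; apply/subsetIP; split.
    rewrite /center; apply/subsetIP; split; first exact: subsetIl.
    apply: subset_trans (subsetIr _ _) _; apply: subset_trans cC _.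
    exact: centS.
  by rewrite perf subsetIl.
have cardE' := maxG _ _ psi stem.
pose f1 := restrm (subsetT E') (@fst_morphism gT (perm_perm_type__canonical__fingroup_FinGroup 'I_(size l).-1.+1)).
have im1 : f1 @* E' = Gh by rewrite morphim_restrm setIid fstE'.
have injf1 : 'injm f1.
  rewrite -card_im_injm im1 eqn_leq -{1}im1 leq_morphim /=.
  exact: cardE'.
pose inv := invm injf1.
have invP g : g \in Gh -> inv g \in E' /\ (inv g).1 = g.
  move=> Gg; have Gg' : g \in f1 @* E' by rewrite im1.
  split; last exact: (invmK injf1 Gg').
  by rewrite -(morphim_invm injf1 (subxx E')) mem_morphim.
have rhoP g : g \in Gh -> exists L, Gamma_f M L /\ (inv g).2 = rperm l L /\ ismono L (phi g).
  move=> Gg; have [iE e1] := invP g Gg.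
  have [_ [L [GL [e2 mL]]]] := EGP _ (subsetP sE'E _ iE).
  by rewrite e1 in mL; exists L.
pose rho g := lmat ((inv g).2).
have rhoL g L : g \in Gh -> Gamma_f M L -> (inv g).2 = rperm l L -> rho g = L.
  by move=> Gg GL e; rewrite /rho e (lmat_rperm Hl ul GL).
have reprP : mx_repr Gh rho.
  split.
    rewrite /rho /inv morph1 /= -(rperm1 Hl ul); exact: (lmat_rperm Hl ul (gammaf1 M)).
  move=> g h Gg Gh'.
  have [L [GL [eL _]]] := rhoP g Gg; have [L' [GL' [eL' _]]] := rhoP h Gh'.
  have Gg' : g \in f1 @* E' by rewrite im1.
  have Gh'' : h \in f1 @* E' by rewrite im1.
  rewrite (rhoL g L) // (rhoL h L') //; apply: rhoL; first exact: groupM.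
    exact: gammaf_mul.
  by rewrite /inv morphM //= eL eL' (rperm_mul Hl ul).
exists (MxRepresentation reprP); split; last first.
  move=> g Gg /=; have [L [GL [eL mL]]] := rhoP g Gg.
  by rewrite (rhoL g L).
pose S := ((@snd gT {perm 'I_(size l).-1.+1}) @* EG)%G.
have invG A : Gamma_f M A -> Gamma_f M (invmx A) /\ rperm l (invmx A) = (rperm l A)^-1%g.
  move=> GA; have : (rperm l A)^-1%g \in S by rewrite groupV; exact: rpS.
  case/morphimP => e _ Ee ee; have [_ [B [GB [eB _]]]] := EGP e Ee.
  have AB1 : A *m B = 1%:M.
    apply: (rperm_inj Hl ul (gammaf_mul GA GB) (gammaf1 M)).
    by rewrite (rperm_mul Hl ul GA GB) (rperm1 Hl ul) -eB /= -ee mulgV.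
  have eI : invmx A = B.
    by rewrite -[invmx A]mulmx1 -AB1 mulmxA mulVmx ?mul1mx // (gammaf_unit GA).
  by rewrite eI ee /= -eB.
have commG A B : Gamma_f M A -> Gamma_f M B ->
    Gamma_f M (mxcomm A B) /\ rperm l (mxcomm A B) = [~ rperm l A, rperm l B]%g.
  move=> GA GB; have [GA' eA] := invG A GA; have [GB' eB] := invG B GB.
  have G1 := gammaf_mul GA' GB'; have G2 := gammaf_mul G1 GA.
  split; first exact: gammaf_mul G2 GB.
  rewrite /mxcomm (rperm_mul Hl ul G2 GB) (rperm_mul Hl ul G1 GA) (rperm_mul Hl ul GA' GB') eA eB.
  by rewrite /commg /conjg !mulgA.
have rpD L : Gamma_f M L -> rperm l L \in (S^`(1))%g.
  move=> GL; have [s [Hs ->]] := pM L GL.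
  elim: s Hs => [|p s IH] Hs /=.
    by rewrite (rperm1 Hl ul) group1.
  have Hs' : forall q, q \in s -> Gamma_f M q.1 /\ Gamma_f M q.2.
    by move=> q qs; apply: Hs; rewrite inE qs orbT.
  have [G1 G2] := Hs p (mem_head _ _).
  have [Gc ec] := commG _ _ G1 G2.
  have Gf : Gamma_f M (foldr (fun p0 acc => mxcomm p0.1 p0.2 *m acc) 1%:M s).
    elim: (s) Hs' => [|q s' IHs] Hq /=; first exact: gammaf1.
    have [H1 H2] := Hq q (mem_head _ _).
    apply: gammaf_mul; first by have [] := commG _ _ H1 H2.
    by apply: IHs => q' q's; apply: Hq; rewrite inE q's orbT.
  rewrite (rperm_mul Hl ul Gc Gf) groupM ?IH // ec.
  by apply: mem_commg; apply: rpS.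
move=> L; split; last first.
  case=> g Gg ->; have [L' [GL' [eL _]]] := rhoP g Gg.
  by rewrite /= (rhoL g L').
move=> GL; have := rpD L GL; rewrite -morphim_der ?subsetT //.
case/morphimP => e _ Ee eL; have [Ge1 [L' [GL' [e2 _]]]] := EGP e (subsetP sE'E _ Ee).
exists e.1 => //=; symmetry; apply: rhoL => //.
have -> : inv e.1 = e by exact: (invmE injf1 Ee).
by [].
Qed.

Lemma induced_part n (G : {group {perm 'I_n}}) (gT : finGroupType)
  (Gh : {group gT}) (phi : {morphism Gh >-> {perm 'I_n}}) (x : 'I_n)
  (rho : mx_representation algC Gh n) :
  phi @* Gh = G ->
  [transitive G, on [set: 'I_n] | 'P] ->
  (forall g, g \in Gh -> ismono (rho g) (phi g)) ->
  induced_from_linear_char (phi @*^-1 'C_G[x | 'P])%G rho.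
Proof.
move=> imG trG mrho.
set Hh := (phi @*^-1 'C_G[x | 'P])%G.
have memH h : h \in Gh -> (h \in Hh) = (phi h x == x).
  move=> Gh0; rewrite !inE Gh0 /= sub1set !inE apermE.
  by rewrite -imG mem_morphim.
have sHG : Hh \subset Gh by apply/subsetP => h; rewrite inE => /andP[].
have r1P : mx_repr Hh (fun h => (rho h x x)%:M : 'M[algC]_1).
  split; first by rewrite repr_mx1 mxE eqxx.
  move=> h h' Hh1 Hh2; have Gh1 := subsetP sHG _ Hh1; have Gh2 := subsetP sHG _ Hh2.
  rewrite repr_mxM // (mulmx_monol _ (mrho _ Gh1)).
  have /eqP -> : phi h x == x by rewrite -memH.
  by rewrite scalar_mxM.
pose lam := cfRepr (MxRepresentation r1P).
have lamH h : h \in Hh -> lam h = rho h x x.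
  by move=> Hh0; rewrite /lam cfunE Hh0 mulr1n mxtrace_scalar.
have lam0 h : h \notin Hh -> lam h = 0 by move=> nH; rewrite cfun0.
have lin : lam \is a linear_char.
  by rewrite qualifE /=; apply/andP; split; [exact: cfRepr_char | rewrite cfRepr1].
have tex i : exists g, (g \in Gh) && (phi g^-1%g x == i).
  have : i \in orbit 'P G x by rewrite (atransP trG) ?inE.
  case/orbitP => s Gs e0; have e : s x = i := e0.
  move: Gs; rewrite -imG => /morphimP[g Dg _ es].
  by exists g^-1%g; rewrite groupV Dg invgK -es e eqxx.
pose t i := odflt 1%g [pick g | (g \in Gh) && (phi g^-1%g x == i)].
have tP i : t i \in Gh /\ phi (t i)^-1%g x = i.
  rewrite /t; case: pickP => [g /andP[? /eqP] //|/= H].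
  by have [g Hg] := tex i; rewrite H in Hg.
have tj j : phi (t j) j = x.
  have [Gt e] := tP j; rewrite morphV // in e.
  by have := congr1 (phi (t j)) e; rewrite permKV => ->.
have trans : left_transversal Gh Hh t.
  split; first by move=> i; case: (tP i).
  split.
    move=> i j; have [Gi ei] := tP i; have [Gj ej] := tP j.
    rewrite memH ?groupM ?groupV // morphM ?groupV // permM ei => /eqP.
    by rewrite -(tj j) => /perm_inj.
  move=> g Gg; exists (phi g^-1%g x); have [Gi ei] := tP (phi g^-1%g x).
  rewrite memH ?groupM ?groupV // morphM ?groupV // permM ei morphV //.
  by rewrite permKV.
pose a i := rho (t i)^-1%g x i.
have a0 i : a i != 0.
  have [Gi ei] := tP i; by rewrite /a (mrho _ (groupVr Gi)) ei.
pose A := diag_mx (\row_i a i).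
have Au : A \in unitmx.
  rewrite unitmxE det_diag unitfE; apply/prodf_neq0 => i _; by rewrite mxE.
have aj j : a j * rho (t j) j x = 1.
  have [Gj ej] := tP j.
  have := congr1 (fun m : 'M_n => m x x) (repr_mxM rho (groupVr Gj) Gj).
  rewrite mulVg repr_mx1 mxE eqxx (mulmx_monol _ (mrho _ (groupVr Gj))) ej /=.
  by move=> h; rewrite /a -h.
exists lam, t, A; split; first exact: lin.
split; first exact: trans.
split; first exact: Au.
move=> g Gg.
suff e : A *m rho g = induced_mx lam t g *m A by rewrite -mulmxA -e mulKmx.
apply/matrixP => i j; rewrite mul_diag_mx mul_mx_diag !mxE.
have [Gi ei] := tP i; have [Gj ej] := tP j.
have Gti : (t i)^-1%g \in Gh by rewrite groupV.
have Gh0 : ((t i)^-1 * g * t j)%g \in Gh by rewrite !groupM.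
have phih : phi ((t i)^-1 * g * t j)%g x = phi (t j) (phi g i).
  by rewrite !morphM ?groupM // !permM ei.
case: (boolP (((t i)^-1 * g * t j)%g \in Hh)) => Hh0.
  rewrite lamH //.
  have pgi : phi g i = j.
    have := Hh0; rewrite memH // phih -{1}(tj j) => /eqP; exact: perm_inj.
  rewrite !repr_mxM ?groupM // -mulmxA (mulmx_monol _ (mrho _ Gti)) ei.
  rewrite (mulmx_monol _ (mrho _ Gg)) pgi.
  by rewrite /a -!mulrA [rho (t j) j x * _]mulrC aj mulr1.
rewrite lam0 // mul0r; apply/eqP; rewrite mulf_eq0 (negbTE (a0 i)) /=.
apply: contraNT Hh0 => nz.
rewrite memH // phih; move: nz; rewrite (mrho _ Gg) => /eqP <-.
by rewrite tj.
Qed.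

Unset Implicit Arguments.

Theorem proposition6p2 (n : nat) (M : 'M[algC]_n)
  (G : {group {perm 'I_n}})
  (gT : finGroupType) (Gh : {group gT}) (phi : {morphism Gh >-> {perm 'I_n}})
  (x : 'I_n) :
  complex_hadamard M ->
  (forall s : {perm 'I_n}, s \in G <-> exists P, Gamma M P /\ underlying_perm P s) ->
  [transitive G, on [set: 'I_n] | 'P] ->
  perfect_group G ->
  perfect_mx (Gamma_f M) ->
  schur_cover phi G ->
  exists rho : mx_representation algC Gh n,
    (forall L, Gamma_f M L <-> exists2 g, g \in Gh & L = rho g) /\
    induced_from_linear_char (phi @*^-1 'C_G[x | 'P])%G rho.
Proof.
move=> [HM _] HGs trG pG pM sc.
have [rho [H1 H2]] := exists_rho x HM HGs pG pM sc.
exists rho; split => //.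
apply: induced_part => //.
by case: sc => [[]].
Qed.
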